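(* Let $\lambda_1,\dots,\lambda_p>0$ be pairwise distinct, $\Sigma=\mathrm{diag}(\lambda_1,\dots,\lambda_p)$, $E$ a real symmetric $p\times p$ matrix, $\widehat\Sigma=\Sigma+E$, $x$ an eigenvalue of $\widehat\Sigma$, $k\in\arg\min_m|\lambda_m-x|$, and $q>0$. Suppose $$\|E(\nu(k))\|\le\frac12\qquad\text{and}\qquad \|E(\nu(k))\|\le \frac{q\sqrt{\delta_k}\,\nu_k(k)}{2\sqrt2}.$$ Then every eigenvector $\vec\eta$ of $\widehat\Sigma$ for $x$ satisfies $\langle\vec\eta,\vec\mu_k\rangle\neq0$, and the angle $\theta\in[0,\pi/2]$ between $\vec\eta$ and $\vec\mu_k$ (defined by $\cos\theta=|\langle\vec\eta,\vec\mu_k\rangle|/\|\vec\eta\|$) satisfies $\tan\theta\le q$, in particular $\sin\theta\le q$.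
   Context: $\vec\mu_1,\dots,\vec\mu_p$ are the standard basis vectors; $\|\cdot\|$ is the operator norm; $\delta_k=\min_{j\ne k}|\lambda_k-\lambda_j|$. For a vector $\nu\in[0,\infty)^p$, $E(\nu)=\mathrm{diag}(\nu)E\,\mathrm{diag}(\nu)$. The vector $\nu(k)$ is defined by $\nu_j(k)=\sqrt2\,|\lambda_j-\lambda_k|^{-1/2}$ for $j\ne k$ and $\nu_k(k)=\max_{j\ne k}\sqrt{\lambda_j/(|\lambda_j-\lambda_k|\,\lambda_k)}$. *)

(* Defs.v *)
From HB Require Import structures.
From mathcomp Require Import all_boot all_order all_algebra.
Set Implicit Arguments. Unset Strict Implicit. Unset Printing Implicit Defensive.
Import Order.TTheory GRing.Theory Num.Theory.
Local Open Scope ring_scope.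

Section Defs.
Variable R : rcfType.
Variable p : nat.

Definition dotv (u v : 'cV[R]_p) : R := \sum_(i < p) u i 0 * v i 0.
Definition vnorm (u : 'cV[R]_p) : R := Num.sqrt (dotv u u).

Definition mu (k : 'I_p) : 'cV[R]_p := delta_mx k 0.

(* ||A|| <= c for the operator norm (sup_{v<>0} |Av|/|v|), unfolded *)
Definition opnorm_le (A : 'M[R]_p) (c : R) : Prop :=
  forall v : 'cV[R]_p, vnorm (A *m v) <= c * vnorm v.

Definition diagm (lam : 'I_p -> R) : 'M[R]_p := diag_mx (\row_i lam i).

Definition Enu (E : 'M[R]_p) (nu : 'I_p -> R) : 'M[R]_p :=
  diagm nu *m E *m diagm nu.

(* delta_k = min_{j <> k} |lambda_k - lambda_j|  (seed = max over all j,
   which does not change the value when p >= 2) *)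
Definition gap (lam : 'I_p -> R) (k : 'I_p) : R :=
  \big[Num.min/ \big[Num.max/0]_(j < p) `|lam k - lam j|]_(j < p | j != k)
     `|lam k - lam j|.

Definition nuvec (lam : 'I_p -> R) (k : 'I_p) (j : 'I_p) : R :=
  if j != k then Num.sqrt 2 * (Num.sqrt `|lam j - lam k|)^-1
  else \big[Num.max/0]_(i < p | i != k)
          Num.sqrt (lam i / (`|lam i - lam k| * lam k)).

Definition eigenvalue_of (A : 'M[R]_p) (x : R) : Prop :=
  exists v : 'cV[R]_p, v != 0 /\ A *m v = x *: v.

Definition eigenvector_of (A : 'M[R]_p) (x : R) (v : 'cV[R]_p) : Prop :=
  v != 0 /\ A *m v = x *: v.

Definition cos_angle (eta u : 'cV[R]_p) : R := `|dotv eta u| / vnorm eta.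
Definition sin_angle (eta u : 'cV[R]_p) : R :=
  Num.sqrt (1 - cos_angle eta u ^+ 2).
Definition tan_angle (eta u : 'cV[R]_p) : R :=
  sin_angle eta u / cos_angle eta u.
End Defs.

(* Main.v *)
Require Import Defs.
From HB Require Import structures.
From mathcomp Require Import all_boot all_order all_algebra.
From mathcomp Require Import ring lra.
Import Order.TTheory GRing.Theory Num.Theory.
Local Open Scope ring_scope.

Lemma dotv_ge0 {R : rcfType} {p} (u : 'cV[R]_p) : 0 <= dotv u u.
Proof. by apply: sumr_ge0 => i _; rewrite -expr2 sqr_ge0. Qed.

Lemma opnorm_sq {R : rcfType} {p} {A : 'M[R]_p} {c : R} v :
  opnorm_le A c -> dotv (A *m v) (A *m v) <= c ^+ 2 * dotv v v.
Proof.
move=> H; have h := H v.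
have h0 : 0 <= vnorm (A *m v) by apply: sqrtr_ge0.
rewrite -(sqr_sqrtr (dotv_ge0 (A *m v))) -(sqr_sqrtr (dotv_ge0 v)).
rewrite -exprMn !expr2; apply: ler_pM => //; exact: le_trans h.
Qed.

Lemma sum_split {R : rcfType} {p} (k : 'I_p) (f : 'I_p -> R) :
  \sum_i f i = f k + \sum_(i | i != k) f i.
Proof. by rewrite (bigD1 k). Qed.

Lemma sqrt_le_of (R : rcfType) (X q : R) : 0 <= X -> 0 < q -> X ^+ 2 <= q ^+ 2 -> X <= q.
Proof.
move=> hX hq h; rewrite -(ler_pXn2r (n:=2)) //; rewrite qualifE /=; exact: ltW.
Qed.
Theorem mainTheorem6 (R : rcfType) (p : nat) (hp : (1 < p)%N)
    (lam : 'I_p -> R) (E : 'M[R]_p) (x q : R) (k : 'I_p)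
    (hpos : forall i, 0 < lam i)
    (hdist : forall i j, i != j -> lam i != lam j)
    (hsym : E^T = E)
    (hx : eigenvalue_of (diagm lam + E) x)
    (hk : forall m : 'I_p, `|lam k - x| <= `|lam m - x|)
    (hq : 0 < q)
    (h1 : opnorm_le (Enu E (nuvec lam k)) (1 / 2))
    (h2 : opnorm_le (Enu E (nuvec lam k))
            (q * Num.sqrt (gap lam k) * nuvec lam k k / (2 * Num.sqrt 2))) :
  forall eta : 'cV[R]_p, eigenvector_of (diagm lam + E) x eta ->
    dotv eta (@mu R p k) != 0 /\
    tan_angle eta (@mu R p k) <= q /\ sin_angle eta (@mu R p k) <= q.
Proof.
move=> eta [etanz eeq].
set n := nuvec lam k.
have [j0 hj0] : exists j : 'I_p, j != k.
  have p0 : (0 < p)%N by apply: ltnW.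
  case: (eqVneq (val k) 0%N) => h.
    by exists (Ordinal hp); apply/eqP => e; rewrite -e in h.
  by exists (Ordinal p0); apply/eqP => e; rewrite -e in h.
have hd : forall j, j != k -> 0 < `|lam j - lam k|.
  by move=> j hj; rewrite normr_gt0 subr_eq0 hdist.
have hnj : forall j, j != k -> n j ^+ 2 * `|lam j - lam k| = 2.
  move=> j hj; rewrite /n /nuvec hj exprMn exprVn !sqr_sqrtr ?normr_ge0 //.
  by rewrite -mulrA mulVf ?mulr1 // gt_eqF ?hd.
have hnk : 0 < n k.
  rewrite /n /nuvec eqxx (bigD1 j0) //= lt_max; apply/orP; left.
  rewrite sqrtr_gt0 divr_gt0 ?hpos // mulr_gt0 ?hpos //; exact: hd.
have hn0 : forall j, n j != 0.
  move=> j; case: (eqVneq j k) => [->|hj]; first by rewrite gt_eqF.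
  apply/eqP => e; have := hnj j hj; rewrite e expr0n /= mul0r => /eqP.
  by rewrite eq_sym pnatr_eq0.
have hdiff : forall j, j != k -> `|lam j - lam k| <= 2 * `|x - lam j|.
  move=> j hj; apply: le_trans (ler_distD x _ _) _.
  rewrite distrC (distrC x) mulr2n mulrDl mul1r lerD2l.
  by rewrite distrC hk.
have hgap : forall j, j != k -> gap lam k <= `|lam j - lam k|.
  move=> j hj; rewrite /gap (bigD1 j) //= ge_min distrC lexx //.
have hgap0 : 0 < gap lam k.
  rewrite /gap; apply: (big_ind (fun y => 0 < y)).
  - rewrite (bigD1 j0) //= lt_max distrC hd //.
  - by move=> a b ha hb; rewrite lt_min ha hb.
  - by move=> j hj; rewrite distrC hd.
pose w : 'cV[R]_p := \col_i (eta i 0 / n i).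
have Dw : diagm n *m w = eta.
  apply/matrixP => i j; rewrite /diagm mul_diag_mx !mxE (ord1 j).
  by rewrite mulrC divfK.
have Ee : E *m eta = x *: eta - diagm lam *m eta.
  by rewrite -eeq mulmxDl addrAC subrr add0r.
pose a i := n i * (x * eta i 0 - lam i * eta i 0).
have Aw : Enu E n *m w = \col_i a i.
  rewrite /Enu -!mulmxA Dw Ee; apply/matrixP => i j.
  by rewrite (ord1 j) /diagm !mul_diag_mx !mxE.
have F1 := opnorm_sq w h1.
have F2 := opnorm_sq w h2.
rewrite Aw /dotv in F1 F2.
pose W i := eta i 0 / n i.
pose e i := eta i 0.
have eW : forall i, e i = n i * W i by move=> i; rewrite /e /W mulrC divfK.
rewrite (eq_bigr (fun i => a i * a i)) in F1; last by move=> i _; rewrite !mxE.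
rewrite (eq_bigr (fun i => a i * a i)) in F2; last by move=> i _; rewrite !mxE.
rewrite [X in _ <= _ * X](eq_bigr (fun i => W i * W i)) in F1; last by move=> i _; rewrite /w mxE.
rewrite [X in _ <= _ * X](eq_bigr (fun i => W i * W i)) in F2; last by move=> i _; rewrite /w mxE.
have P1 : forall j, j != k -> W j * W j <= a j * a j.
  move=> j hj.
  have ea : a j * a j = (n j ^+ 2 * (x - lam j)) ^+ 2 * (W j * W j).
    by rewrite /a -/(e j) eW; ring.
  have hy : 1 <= n j ^+ 2 * `|x - lam j|.
    rewrite -(ler_pM2r (hd j hj)) mul1r -mulrA (mulrC `|x - lam j|) mulrA (hnj j hj).
    exact: hdiff j hj.
  have hy2 : (n j ^+ 2 * (x - lam j)) ^+ 2 = (n j ^+ 2 * `|x - lam j|) ^+ 2.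
    by rewrite !exprMn real_normK ?num_real.
  rewrite ea hy2 -{1}(mul1r (W j * W j)); apply: ler_wpM2r.
    by rewrite -expr2 sqr_ge0.
  by rewrite expr2 -(mulr1 1); apply: ler_pM.
have P2 : forall j, j != k -> gap lam k / 2 * (e j * e j) <= a j * a j.
  move=> j hj.
  have ea : a j * a j = (n j ^+ 2 * `|x - lam j| ^+ 2) * (e j * e j).
    by rewrite real_normK ?num_real /a -/(e j); ring.
  rewrite ea; apply: ler_wpM2r; first by rewrite -expr2 sqr_ge0.
  rewrite -(ler_pM2r (hd j hj)).
  have -> : n j ^+ 2 * `|x - lam j| ^+ 2 * `|lam j - lam k| = 
            (n j ^+ 2 * `|lam j - lam k|) * `|x - lam j| ^+ 2 by ring.
  rewrite (hnj j hj).
  have g0 := ltW hgap0.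
  have d0 := ltW (hd j hj).
  have t0 : 0 <= `|x - lam j| by [].
  have := ler_pM g0 d0 (hgap j hj) (lexx `|lam j - lam k|).
  have := ler_pM d0 d0 (hdiff j hj) (hdiff j hj).
  nra.
rewrite !(sum_split k) in F1 F2.
set Sa := \sum_(i | i != k) a i * a i in F1 F2.
set SW := \sum_(i | i != k) W i * W i in F1 F2.
pose Se := \sum_(i | i != k) e i * e i.
have hSWa : SW <= Sa by apply: ler_sum => i hi; exact: P1.
have hSea : gap lam k / 2 * Se <= Sa by rewrite mulr_sumr; apply: ler_sum => i hi; exact: P2.
have ak0 : 0 <= a k * a k by rewrite -expr2 sqr_ge0.
have Wk0 : 0 <= W k * W k by rewrite -expr2 sqr_ge0.
have SW0 : 0 <= SW by apply: sumr_ge0 => i _; rewrite -expr2 sqr_ge0.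
have Se0 : 0 <= Se by apply: sumr_ge0 => i _; rewrite -expr2 sqr_ge0.
have hSW : 3 * SW <= W k * W k by lra.
have Wknz : W k != 0.
  apply/eqP => Wk; apply/negP: etanz; apply/negPn/eqP; apply/matrixP => i j.
  rewrite (ord1 j) mxE -/(e i) eW.
  case: (eqVneq i k) => [->|hi]; first by rewrite Wk mulr0.
  have SWz : SW = 0 by move: hSW; rewrite Wk mulr0; lra.
  have hW0 : forall i0, i0 != k -> 0 <= W i0 * W i0.
    by move=> i0 _; rewrite -expr2 sqr_ge0.
  have := psumr_eq0P hW0 SWz hi.
  by move/eqP; rewrite mulf_eq0 orbb => /eqP ->; rewrite mulr0.
have eknz : e k != 0 by rewrite eW mulf_neq0.
have dotk : dotv eta (mu R k) = e k.
  rewrite /dotv (bigD1 k) //= big1 ?addr0; first by rewrite /mu mxE !eqxx mulr1.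
  by move=> i hi; rewrite /mu mxE (negbTE hi) mulr0.
split; first by rewrite dotk.
set c := (q * _ * _ / _) in F2.
have hc : c ^+ 2 = q ^+ 2 * gap lam k * n k ^+ 2 / 8.
  by rewrite /c expr_div_n !exprMn !sqr_sqrtr ?ltW // /n; field.
have c20 : 0 <= c ^+ 2 by apply: sqr_ge0.
have hcSW : c ^+ 2 * (3 * SW) <= c ^+ 2 * (W k * W k) by apply: ler_wpM2l.
have e1 : 6 * (c ^+ 2 * (W k * W k) * 4 / 3) = gap lam k * (q ^+ 2 * (e k * e k)).
  by rewrite hc eW; field.
have key : gap lam k * (3 * Se) <= gap lam k * (q ^+ 2 * (e k * e k)).
  rewrite -e1; lra.
have Se3 : 3 * Se <= q ^+ 2 * (e k * e k) by rewrite -(ler_pM2l hgap0).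
have ek2 : 0 < e k * e k by rewrite lt_def mulf_neq0 //= -expr2 sqr_ge0.
have hM : dotv eta eta = e k * e k + Se by rewrite /dotv (sum_split k).
set M := e k * e k + Se in hM.
have M0 : 0 < M by rewrite /M; lra.
have hcos2 : cos_angle eta (mu R k) ^+ 2 = e k * e k / M.
  rewrite /cos_angle dotk /vnorm hM expr_div_n real_normK ?num_real //.
  by rewrite sqr_sqrtr ?ltW // expr2.
have cos0 : 0 < cos_angle eta (mu R k).
  by rewrite /cos_angle dotk divr_gt0 // ?normr_gt0 // /vnorm sqrtr_gt0 hM.
have hs : 1 - cos_angle eta (mu R k) ^+ 2 = Se / M.
  by rewrite hcos2 /M; field; rewrite -/M gt_eqF.
have hsin2 : sin_angle eta (mu R k) ^+ 2 = Se / M.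
  by rewrite /sin_angle hs sqr_sqrtr // divr_ge0 // ltW.
have sin0 : 0 <= sin_angle eta (mu R k) by apply: sqrtr_ge0.
split.
  apply: sqrt_le_of => //; first by rewrite /tan_angle divr_ge0 // ltW.
  rewrite /tan_angle expr_div_n hsin2 hcos2.
  have -> : Se / M / (e k * e k / M) = Se / (e k * e k).
    by field; rewrite eknz gt_eqF.
  rewrite ler_pdivrMr //.
  have : 0 <= q ^+ 2 * (e k * e k) by rewrite mulr_ge0 // ?sqr_ge0 // ltW.
  lra.
apply: sqrt_le_of => //; rewrite hsin2 ler_pdivrMr //.
have : 0 <= q ^+ 2 * Se by rewrite mulr_ge0 // sqr_ge0.
rewrite /M; lra.
Qed.
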